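(* Let $m\ge 4$ be an integer, and let $H_m$ be the group defined below. Then: (i) $C_{H_m}((x_1,0)) = \langle (x_1,0),(x_2,0),(0,w) \mid w\in W_m\rangle$ and $C_{H_m}((x_m,0)) = \langle (x_m,0),(x_{m-1},0),(0,w)\mid w\in W_m\rangle$; (ii) $[H_m,H_m]=Z(H_m)=\{(0,w)\in H_m \mid w\in W_m\}$, and this group has order $2^{m-2}$; (iii) $X=\{(v,0)\in H_m\mid v\in V_m\}$ is a transversal to $Z(H_m)$ in $H_m$; (iv) $\langle (x_1,0),\dots,(x_{m-1},0)\rangle \cong H_{m-1}$.
   Context: For an integer $m\ge 3$, let $V_m$ and $W_m$ be vector spaces over $\mathrm{GF}(2)$ of dimensions $m$ and $m-2$, with ordered bases $x_1,\dots,x_m$ and $y_1,\dots,y_{m-2}$ respectively. Let $f_m:V_m\times V_m\to W_m$ be the bilinear map determined on basis vectors by $f_m(x_i,x_j)=0$ if $j\in\{i,i+1\}$, $f_m(x_i,x_j)=y_{j-i-1}$ if $i+2\le j\le m$, and $f_m(x_i,x_j)=0$ if $i>j$. The group $H_m$ has underlying set $V_m\times W_m$ with multiplication $(a,b)\cdot(c,d)=(a+c,\ f_m(a,c)+b+d)$; its identity is $(0,0)$. *)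

(* Defs.v *)
From HB Require Import structures.
From mathcomp Require Import all_boot all_fingroup all_algebra.
Set Implicit Arguments. Unset Strict Implicit. Unset Printing Implicit Defensive.
Import GRing.Theory.
Local Open Scope ring_scope.

Definition Vm (m : nat) := 'rV['F_2]_m.
Definition Wm (m : nat) := 'rV['F_2]_(m - 2).

(* 1-based basis vector x_i of V_m (resp. y_i of W_m): coordinate j (0-based)
   is 1 iff j+1 = i. *)
Definition xb (m i : nat) : 'rV['F_2]_m := \row_(j < m) ((j.+1 == i)%:R).

(* On basis vectors (1-based)
   f(x_i, x_j) = y_(j-i-1) if j >= i+2, and 0 otherwise.  With 0-based
   indices i, j of V_m and k of W_m this is: coefficient of y at k is 1
   iff j = i + k + 2. *)
Definition fB (m : nat) (k : 'I_(m - 2)) : 'M['F_2]_m :=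
  \matrix_(i < m, j < m) (((j : nat) == (i + k + 2)%N)%:R).
Definition fm (m : nat) (a c : 'rV['F_2]_m) : 'rV['F_2]_(m - 2) :=
  \row_(k < m - 2) (a *m fB k *m c^T) 0 0.

Lemma fmE m a c k : @fm m a c 0 k = (a *m fB k *m c^T) 0 0.
Proof. by rewrite mxE. Qed.

Lemma fmDl m a b c : @fm m (a + b) c = fm a c + fm b c.
Proof. by apply/rowP => k; rewrite [RHS]mxE !fmE !mulmxDl mxE. Qed.
Lemma fmDr m a b c : @fm m a (b + c) = fm a b + fm a c.
Proof. by apply/rowP => k; rewrite [RHS]mxE !fmE linearD /= mulmxDr mxE. Qed.
Lemma fmNl m a c : @fm m (- a) c = - fm a c.
Proof. by apply/rowP => k; rewrite [RHS]mxE !fmE !mulNmx mxE. Qed.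
Lemma fmNr m a c : @fm m a (- c) = - fm a c.
Proof. by apply/rowP => k; rewrite [RHS]mxE !fmE linearN /= mulmxN mxE. Qed.
Lemma fm0l m c : @fm m 0 c = 0.
Proof. by apply/rowP => k; rewrite [RHS]mxE !fmE !mul0mx mxE. Qed.

Definition Hm (m : nat) : Type := (Vm m * Wm m)%type.
HB.instance Definition _ m := Finite.on (Hm m).

Definition hm (m : nat) (a : 'rV['F_2]_m) (b : 'rV['F_2]_(m - 2)) : Hm m :=
  (a, b).

Definition Hmul m (x y : Hm m) : Hm m :=
  (x.1 + y.1, fm x.1 y.1 + x.2 + y.2).
Definition Hone m : Hm m := (0, 0).
Definition Hinv m (x : Hm m) : Hm m := (- x.1, - (x.2 + fm x.1 (- x.1))).

Lemma AC4 (V : zmodType) (p q r s : V) : p + q + r + s = q + s + p + r.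
Proof. by rewrite (addrC p q) (addrAC (q + p)) (addrAC q). Qed.

Lemma HmulA m : associative (@Hmul m).
Proof.
move=> [a b] [c d] [e g]; rewrite /Hmul /=; congr pair; first by rewrite addrA.
rewrite fmDl fmDr !addrA; congr (_ + _ + _).
exact: AC4.
Qed.

Lemma Hmul1 m : left_id (@Hone m) (@Hmul m).
Proof. by move=> [a b]; rewrite /Hmul /= fm0l !add0r. Qed.

Lemma HmulV m : left_inverse (@Hone m) (@Hinv m) (@Hmul m).
Proof.
move=> [a b]; rewrite /Hmul /Hinv /Hone /=; congr pair; first by rewrite addNr.
by rewrite fmNl fmNr opprD addrA addrAC -!addrA addNr addr0 addrC addNr.
Qed.

HB.instance Definition _ m :=
  Finite_isGroup.Build (Hm m) (@HmulA m) (@Hmul1 m) (@HmulV m).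

Definition Zset m : {set Hm m} := [set hm 0 w | w : 'rV['F_2]_(m - 2)].

Lemma Hm_mulE m (a c : 'rV['F_2]_m) (b d : 'rV['F_2]_(m - 2)) :
  (hm a b * hm c d)%g = hm (a + c) (fm a c + b + d).
Proof. by []. Qed.
Lemma Hm_oneE m : (1%g : Hm m) = hm 0 0.
Proof. by []. Qed.

(* Main.v *)
Require Import Defs.
From HB Require Import structures.
From mathcomp Require Import all_boot all_fingroup all_algebra all_solvable.
From mathcomp Require Import zify ring.
Set Implicit Arguments. Unset Strict Implicit. Unset Printing Implicit Defensive.
Import GRing.Theory.
Local Open Scope ring_scope.

Lemma F2cases (x : 'F_2) : x = 0 \/ x = 1.
Proof. move: x => [[|[|//]] p]; [left|right]; exact: val_inj. Qed.

Definition an n (a : 'rV['F_2]_n) (i : nat) : 'F_2 :=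
  if insub i is Some j then a 0 j else 0.

Lemma anE n (a : 'rV['F_2]_n) (j : 'I_n) : an a j = a 0 j.
Proof. by rewrite /an (insubT (fun i : nat => (i < n)%N) (ltn_ord j)) /=; congr (a 0 _); apply: val_inj. Qed.

Lemma an_out n (a : 'rV['F_2]_n) i : (n <= i)%N -> an a i = 0.
Proof. by move=> h; rewrite /an insubF // ltnNge h. Qed.

Lemma an_inj n (a b : 'rV['F_2]_n) : (forall i, an a i = an b i) -> a = b.
Proof. by move=> h; apply/rowP => j; rewrite -!anE h. Qed.

Lemma anD n (a b : 'rV['F_2]_n) i : an (a + b) i = an a i + an b i.
Proof. by rewrite /an; case: insub => [j|]; rewrite ?mxE ?addr0. Qed.
Lemma anN n (a : 'rV['F_2]_n) i : an (- a) i = - an a i.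
Proof. by rewrite /an; case: insub => [j|]; rewrite ?mxE ?oppr0. Qed.
Lemma anB n (a b : 'rV['F_2]_n) i : an (a - b) i = an a i - an b i.
Proof. by rewrite anD anN. Qed.
Lemma an0 n i : an (0 : 'rV['F_2]_n) i = 0.
Proof. by rewrite /an; case: insub => [j|]; rewrite ?mxE. Qed.
Lemma an_xb n p i : an (xb n p) i = ((i.+1 == p) && (i < n)%N)%:R.
Proof.
case: (ltnP i n) => h; last by rewrite an_out // andbF.
by rewrite -[i]/(val (Ordinal h)) anE mxE andbT.
Qed.
Lemma an_delta n (k : 'I_n) i : an (delta_mx 0 k) i = (i == k)%:R.
Proof.
case: (ltnP i n) => h; last first.
  rewrite an_out //; case: eqP => // e; move: h; rewrite e leqNgt ltn_ord //.
by rewrite -[i]/(val (Ordinal h)) anE mxE.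
Qed.

Definition ext n N (a : 'rV['F_2]_n) : 'rV['F_2]_N := \row_(j < N) an a j.
Lemma an_ext n N (a : 'rV['F_2]_n) i : (n <= N)%N -> an (ext N a) i = an a i.
Proof.
move=> hn; case: (ltnP i N) => h.
  by rewrite -[i]/(val (Ordinal h)) anE mxE.
by rewrite !an_out // (leq_trans hn h).
Qed.

Lemma sum_pick N p (F : nat -> 'F_2) :
  \sum_(0 <= i < N) (i == p)%:R * F i = (p < N)%:R * F p.
Proof.
elim: N => [|N IH]; first by rewrite big_geq // mul0r.
rewrite big_nat_recr //= IH; case: (ltngtP p N) => h.
- by rewrite ltnS (ltnW h) mul0r addr0.
- by rewrite ltnS leqNgt h /= !mul0r addr0.
- by rewrite h ltnSn mul0r add0r.
Qed.

Lemma sum_trunc n N (u G : nat -> 'F_2) : (forall i, (n <= i)%N -> u i = 0) ->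
  (n <= N)%N -> \sum_(0 <= i < N) u i * G i = \sum_(0 <= i < n) u i * G i.
Proof.
move=> hu hN; rewrite (@big_cat_nat _ _ _ n 0 N) //=.
rewrite -[RHS]addr0; congr (_ + _); rewrite big1_seq // => i.
rewrite mem_index_iota /= => /andP[h _].
by rewrite (hu i h) mul0r.
Qed.

Lemma an_fm m (a c : 'rV['F_2]_m) k :
  an (fm a c) k = \sum_(0 <= i < m) an a i * an c (i + k + 2).
Proof.
case: (ltnP k (m - 2)) => hk; last first.
  rewrite an_out // big1_seq // => i; rewrite mem_index_iota => /andP[_ hi].
  by rewrite (an_out c) ?mulr0 //; lia.
rewrite -[k]/(val (Ordinal hk)) anE fmE mxE.
rewrite big_mkord /=.
transitivity (\sum_(j < m) \sum_(i < m) a 0 i * ((((j : nat) == i + k + 2)%N)%:R * c 0 j)).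
  by apply: eq_bigr => j _; rewrite !mxE big_distrl /=; apply: eq_bigr => i _; rewrite !mxE mulrA.
rewrite exchange_big; apply: eq_bigr => i _ /=.
rewrite -anE -big_distrr /=; congr (_ * _).
have -> : \sum_(j < m) (((j : nat) == i + k + 2)%N)%:R * c 0 j =
   \sum_(j < m) (((j : nat) == i + k + 2)%N)%:R * an c j.
  by apply: eq_bigr => j _; rewrite anE.
rewrite -(big_mkord xpredT (fun j => ((j == i + k + 2)%N)%:R * an c j)) sum_pick.
by case: ltnP => h; rewrite ?mul1r // an_out // mul0r.
Qed.

Lemma fm0r m (a : 'rV['F_2]_m) : fm a 0 = 0.
Proof. by apply: an_inj => k; rewrite an_fm an0 big1 // => i _; rewrite an0 mulr0. Qed.

Lemma an_fm_x1l m (c : 'rV['F_2]_m) k : (0 < m)%N -> an (fm (xb m 1) c) k = an c (k + 2).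
Proof.
move=> hm; rewrite an_fm.
rewrite (eq_big_nat _ _ (F2 := fun i => (i == 0)%:R * an c (i + k + 2))).
  by rewrite sum_pick hm mul1r.
by move=> i /andP[_ hi]; rewrite an_xb hi andbT eqSS.
Qed.

Lemma an_fm_x1r m (c : 'rV['F_2]_m) k : an (fm c (xb m 1)) k = 0.
Proof.
rewrite an_fm big1 // => i _; rewrite an_xb.
have -> : ((i + k + 2).+1 == 1) = false by apply/negbTE/eqP; lia.
by rewrite mulr0.
Qed.

Lemma an_fm_xml m (c : 'rV['F_2]_m) k : an (fm (xb m m) c) k = 0.
Proof.
rewrite an_fm big1 // => i _; rewrite an_xb.
case: eqP => [e|_] /=; last by rewrite mul0r.
by rewrite an_out ?mulr0 //; lia.
Qed.

Lemma an_fm_xmr m (c : 'rV['F_2]_m) k :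
  an (fm c (xb m m)) k = if (k + 3 <= m)%N then an c (m - (k + 3)) else 0.
Proof.
rewrite an_fm; case: ifP => hk; last first.
  rewrite big1 // => i _; rewrite an_xb.
  have -> : ((i + k + 2).+1 == m) = false by apply/negbTE/eqP; lia.
  by rewrite mulr0.
rewrite (eq_big_nat _ _ (F2 := fun i => (i == (m - (k + 3))%N)%:R * an c i)).
  rewrite sum_pick; have -> : (m - (k + 3) < m)%N by lia.
  by rewrite mul1r.
move=> i /andP[_ hi]; rewrite an_xb mulrC.
have -> : (((i + k + 2).+1 == m) && (i + k + 2 < m)%N) = (i == (m - (k + 3))%N) => //.
apply/andP/eqP => [[/eqP ? ?]|?]; [|split; [apply/eqP|]]; lia.
Qed.

Local Open Scope group_scope.

Lemma Hm_invE m (s : 'rV['F_2]_m) t : (hm s t)^-1 = hm (- s) (- (t + fm s (- s))).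
Proof. by []. Qed.

Lemma inv_same m (s : 'rV['F_2]_m) t t' : (hm s t)^-1 * hm s t' = hm 0 (t' - t).
Proof.
rewrite Hm_invE Hm_mulE addNr fmNl fmNr; congr hm.
move: (fm s s) => F; apply/rowP => k; rewrite !mxE; ring.
Qed.

Lemma commgE m (a c : 'rV['F_2]_m) b d : [~ hm a b, hm c d] = hm 0 (fm a c - fm c a).
Proof.
have -> : [~ hm a b, hm c d] = (hm c d * hm a b)^-1 * (hm a b * hm c d).
  by rewrite [hm a b * hm c d]commgC mulKg.
rewrite [hm c d * hm a b]Hm_mulE [hm a b * hm c d]Hm_mulE [c + a]addrC inv_same; congr hm.
move: (fm a c) (fm c a) => F G; apply/rowP => k; rewrite !mxE; ring.
Qed.

Lemma centE m (x y : Hm m) : (y \in 'C[x]) = (fm y.1 x.1 == fm x.1 y.1).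
Proof.
case: x y => [a b] [c d]; rewrite cent1E.
change (((c + a, fm c a + d + b) == (a + c, fm a c + b + d)) = (fm c a == fm a c)).
rewrite xpair_eqE addrC eqxx /= [fm c a + d + b]addrAC.
by rewrite (inj_eq (addIr _)) (inj_eq (addIr _)).
Qed.

Lemma cent_x1 m (y : Hm m) : (0 < m)%N ->
  y \in 'C[hm (xb m 1) 0%R] <-> forall i, (2 <= i)%N -> an y.1 i = 0.
Proof.
move=> m0; rewrite centE /=.
have -> : fm y.1 (xb m 1) = 0%R by apply: an_inj => k; rewrite an_fm_x1r an0.
split.
  move/eqP => e i hi; have := congr1 (fun v => an v (i - 2)) e.
  by rewrite an0 an_fm_x1l // subnK.
move=> h; apply/eqP/an_inj => k; rewrite an0 an_fm_x1l // h //; lia.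
Qed.

Lemma cent_xm m (y : Hm m) :
  y \in 'C[hm (xb m m) 0%R] <-> forall i, (i + 3 <= m)%N -> an y.1 i = 0.
Proof.
rewrite centE /=.
have -> : fm (xb m m) y.1 = 0%R by apply: an_inj => k; rewrite an_fm_xml an0.
split.
  move/eqP => e i hi; have := congr1 (fun v => an v (m - 3 - i)) e.
  rewrite an0 an_fm_xmr.
  have -> : (m - 3 - i + 3 <= m)%N by lia.
  by have -> : (m - (m - 3 - i + 3))%N = i by lia.
move=> h; apply/eqP/an_inj => k; rewrite an0 an_fm_xmr; case: ifP => // hk.
apply: h; lia.
Qed.

Lemma inZ m (y : Hm m) : (4 <= m)%N -> (y \in 'Z([set: Hm m])) = (y.1 == 0%R).
Proof.
move=> m4; apply/idP/idP.
  move=> hz; have hc : forall x, y \in 'C[x].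
    move=> x; rewrite cent1E; apply/eqP.
    by move: hz; rewrite inE => /andP[_ /centP]; apply; rewrite inE.
  have c1 := (cent_x1 y (ltnW (leq_ltn_trans (isT : (0 < 3)%N) m4))).1 (hc _).
  have cm := (cent_xm y).1 (hc _).
  apply/eqP/an_inj => i; rewrite an0; case: (leqP 2 i) => hi; first exact: c1.
  apply: cm; lia.
move=> /eqP e; rewrite inE inE; apply/centP => z _; apply/eqP.
by rewrite -cent1E centE e fm0l fm0r.
Qed.

Lemma inZset m (y : Hm m) : (y \in Zset m) = (y.1 == 0%R).
Proof.
apply/imsetP/eqP => [[w _ ->] //|].
by case: y => a b /= ->; exists b.
Qed.

Local Open Scope ring_scope.
Lemma span_ind n (Q : 'rV['F_2]_n -> Prop) (P : pred 'I_n) :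
  Q 0%R -> (forall u v, Q u -> Q v -> Q (u + v)%R) ->
  (forall j, P j -> Q (delta_mx 0 j)) ->
  forall c : 'rV['F_2]_n, (forall j, ~~ P j -> c 0 j = 0%R) -> Q c.
Proof.
move=> Q0 QD Qd c hc; rewrite (row_sum_delta c); apply: big_ind => // j _.
case: (F2cases (c 0 j)) => e; rewrite e ?scale0r ?scale1r //.
apply: Qd; apply/negPn/negP => nP; move: (hc j nP); rewrite e => /eqP.
by rewrite oner_eq0.
Qed.

Lemma xb_delta m (j : 'I_m) : xb m j.+1 = delta_mx 0 j.
Proof.
apply: an_inj => i; rewrite an_xb an_delta eqSS.
by case: eqP => [->|]; rewrite ?ltn_ord ?andbF.
Qed.
Local Open Scope group_scope.

Lemma gen_from m (K : {group Hm m}) (P : pred 'I_m) :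
  (forall j : 'I_m, P j -> hm (xb m j.+1) 0%R \in K) ->
  forall c : 'rV['F_2]_m, (forall j, ~~ P j -> c 0%R j = 0%R) ->
  exists d, hm c d \in K.
Proof.
move=> hK; apply: (span_ind (Q := fun c => exists d, hm c d \in K)).
- by exists 0%R; rewrite -Hm_oneE group1.
- by move=> u v [d1 h1] [d2 h2]; exists (fm u v + d1 + d2)%R; rewrite -Hm_mulE groupM.
- by move=> j hj; exists 0%R; rewrite -xb_delta hK.
Qed.

Lemma split_hm m (c : 'rV['F_2]_m) d d' : hm c d = hm c d' * hm 0%R (d - d')%R.
Proof. by rewrite Hm_mulE addr0 fm0r add0r addrC subrK. Qed.

Lemma part_i1 m : (4 <= m)%N ->
  'C[hm (xb m 1) 0%R] = <<[set hm (xb m 1) 0%R; hm (xb m 2) 0%R] :|: Zset m>>.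
Proof.
move=> m4; have m0 : (0 < m)%N by lia.
apply/eqP; rewrite eqEsubset; apply/andP; split; last first.
  rewrite gen_subG; apply/subsetP => y /setUP [/set2P [->|->]|hz];
    apply/(cent_x1 _ m0) => i hi /=.
  - by rewrite an_xb; case: eqP => //; lia.
  - by rewrite an_xb; case: eqP => //; lia.
  - by move: hz; rewrite inZset => /eqP->; rewrite an0.
apply/subsetP => y /(cent_x1 _ m0) hy.
have [d hd] : exists d, hm y.1 d \in <<[set hm (xb m 1) 0%R; hm (xb m 2) 0%R] :|: Zset m>>.
  apply: (gen_from (P := fun j : 'I_m => (j < 2)%N)).
    move=> j hj; apply: mem_gen; rewrite !inE.
    by case: j hj => [[|[|//]] ?] /= _; rewrite eqxx ?orbT.
  by move=> j hj; rewrite -anE hy // leqNgt.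
move: hd; case: y {hy} => a b /= hd; rewrite -[(a, b)]/(hm a b).
rewrite (split_hm _ _ d) groupM // mem_gen // inE inZset eqxx orbT //.
Qed.

Lemma part_i2 m : (4 <= m)%N ->
  'C[hm (xb m m) 0%R] = <<[set hm (xb m m) 0%R; hm (xb m m.-1) 0%R] :|: Zset m>>.
Proof.
move=> m4.
apply/eqP; rewrite eqEsubset; apply/andP; split; last first.
  rewrite gen_subG; apply/subsetP => y /setUP [/set2P [->|->]|hz];
    apply/cent_xm => // i hi /=.
  - by rewrite an_xb; case: eqP => //; lia.
  - by rewrite an_xb; case: eqP => //; lia.
  - by move: hz; rewrite inZset => /eqP->; rewrite an0.
apply/subsetP => y /cent_xm hy.
have [d hd] : exists d, hm y.1 d \in <<[set hm (xb m m) 0%R; hm (xb m m.-1) 0%R] :|: Zset m>>.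
  apply: (gen_from (P := fun j : 'I_m => (m - 2 <= j)%N)).
    move=> j hj; apply: mem_gen; rewrite !inE.
    case: (eqVneq j.+1 m) => [->|ne]; first by rewrite eqxx.
    have -> : j.+1 = m.-1 by move: (ltn_ord j) ne => ? /eqP; lia.
    by rewrite eqxx orbT.
  by move=> j hj; rewrite -anE hy //; move: hj; rewrite -ltnNge; lia.
move: hd; case: y {hy} => a b /= hd; rewrite -[(a, b)]/(hm a b).
rewrite (split_hm _ _ d) groupM // mem_gen // inE inZset eqxx orbT //.
Qed.

Lemma genZ m (K : {group Hm m}) (P : pred 'I_(m - 2)) :
  (forall j, P j -> hm 0%R (delta_mx 0%R j) \in K) ->
  forall w : 'rV['F_2]_(m - 2), (forall j, ~~ P j -> w 0%R j = 0%R) -> hm 0%R w \in K.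
Proof.
move=> hK; apply: (span_ind (Q := fun w => hm 0%R w \in K)).
- by rewrite -Hm_oneE group1.
- move=> u v h1 h2.
  have -> : hm 0%R (u + v)%R = hm 0%R u * hm 0%R v by rewrite Hm_mulE addr0 fm0l add0r.
  exact: groupM.
- exact: hK.
Qed.

Lemma comm_x1 m (j : 'I_(m - 2)) : (4 <= m)%N ->
  [~ hm (xb m 1) 0%R, hm (xb m (j + 3)) 0%R] = hm 0%R (delta_mx 0%R j).
Proof.
move=> m4; rewrite commgE; congr hm.
apply: an_inj => k; rewrite anB an_fm_x1l ?an_fm_x1r ?subr0 ?an_xb ?an_delta; last by lia.
have hj := ltn_ord j.
have -> : (((k + 2).+1 == (j + 3)%N) && (k + 2 < m)%N) = (k == j) => //.
by apply/andP/eqP => [[/eqP ? ?]|?]; [|split; [apply/eqP|]]; lia.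
Qed.

Lemma part_Z m : (4 <= m)%N -> 'Z([set: Hm m]) = Zset m.
Proof. by move=> m4; apply/setP => y; rewrite inZ // inZset. Qed.

Lemma card_Zset m : #|Zset m| = (2 ^ (m - 2))%N.
Proof.
rewrite card_imset; last by move=> u v [].
by rewrite card_mx card_Fp // mul1n.
Qed.

Lemma part_der m : (4 <= m)%N -> [~: [set: Hm m], [set: Hm m]] = 'Z([set: Hm m]).
Proof.
move=> m4; apply/eqP; rewrite eqEsubset; apply/andP; split.
  rewrite gen_subG; apply/subsetP => _ /imset2P [[a b] [c d] _ _ ->].
  by rewrite -[(a, b)]/(hm a b) -[(c, d)]/(hm c d) commgE inZ.
apply/subsetP => -[a b]; rewrite inZ //= => /eqP ->.
apply: (genZ (P := predT)) => // j _.
rewrite -(comm_x1 j m4); apply: mem_commg; exact: in_setT.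
Qed.

Lemma inX m (z : Hm m) : (z \in [set hm v 0%R | v : 'rV['F_2]_m]) = (z.2 == 0%R).
Proof.
apply/imsetP/eqP => [[v _ ->] //|].
by case: z => a b /= ->; exists a.
Qed.

Lemma part_iii m : (4 <= m)%N -> is_transversal [set hm v 0%R | v : 'rV['F_2]_m]
       (rcosets 'Z([set: Hm m]) [set: Hm m]) [set: Hm m].
Proof.
move=> m4; apply/and3P; split; first exact: rcosets_partition (subsetT _).
  exact: subsetT.
apply/forall_inP => B /rcosetsP [[c d] _ ->].
have -> : [set hm v 0%R | v : 'rV['F_2]_m] :&: 'Z([set: Hm m]) :* (c, d) = [set hm c 0%R].
  apply/setP => -[a b]; rewrite in_setI mem_rcoset in_set1 inX /=.
  rewrite -[(a, b)]/(hm a b) -[(c, d)]/(hm c d) Hm_invE Hm_mulE inZ //= subr_eq0.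
  by rewrite /hm xpair_eqE andbC.
by rewrite cards1.
Qed.

Definition psi m (x : Hm (m - 1)) : Hm m := hm (ext m x.1) (ext (m - 2) x.2).

Lemma le1 m : (m - 1 <= m)%N. Proof. exact: leq_subr. Qed.
Lemma le2 m : (m - 1 - 2 <= m - 2)%N. Proof. lia. Qed.

Lemma psiM m : {morph @psi m : x y / x * y}.
Proof.
move=> [a b] [c d].
change (psi (a + c, fm a c + b + d)%R = hm (ext m a) (ext (m - 2) b) * hm (ext m c) (ext (m - 2) d)).
rewrite Hm_mulE /psi /=; congr hm; apply: an_inj => i.
  by rewrite !anD !an_ext ?le1 // anD.
rewrite !anD !an_ext ?le2 // !anD !an_fm; congr (_ + _ + _).
symmetry; rewrite (eq_bigr (fun j => (an a j * an c (j + i + 2))%R)); last first.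
  by move=> j _; rewrite !an_ext ?le1.
rewrite (@sum_trunc (m - 1) m) ?le1 // => j hj; exact: an_out.
Qed.

Lemma psi_inj m : injective (@psi m).
Proof.
move=> [a b] [c d] /(congr1 (fun x => (an x.1, an x.2))) [e1 e2].
congr pair; apply: an_inj => i.
  by have := congr1 (fun f => f i) e1; rewrite /= !an_ext ?le1.
by have := congr1 (fun f => f i) e2; rewrite /= !an_ext ?le2.
Qed.

Definition psiMorph m : {morphism [set: Hm (m - 1)] >-> Hm m} :=
  Morphism (in2W (@psiM m)).

Lemma part_iv m : (4 <= m)%N ->
  <<[set hm (xb m i.+1) 0%R | i : 'I_(m - 1)]>> \isog [set: Hm (m - 1)].
Proof.
move=> m4; rewrite isog_sym; apply/isogP; exists (psiMorph m).
  by apply/injmP => x y _ _; apply: psi_inj.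
set G := <<[set hm (xb m i.+1) 0%R | i : 'I_(m - 1)]>>.
have hsub : G \subset psiMorph m @* [set: Hm (m - 1)].
  rewrite gen_subG; apply/subsetP => _ /imsetP [i _ ->].
  have -> : hm (xb m i.+1) 0%R = psiMorph m (hm (xb (m - 1) i.+1) 0%R); last first.
    by apply: mem_morphim; rewrite inE.
  rewrite /= /psi /=; congr hm; apply: an_inj => k; rewrite an_ext ?le1 ?le2 //.
    rewrite !an_xb eqSS; case: eqP => // ->; have hi := ltn_ord i; rewrite hi (_ : (i < m)%N) //; lia.
  by rewrite (@an0 (m - 1 - 2) k) (@an0 (m - 2) k).
have lastz : forall c d, hm c d \in G -> an d (m - 3) = 0%R.
  move=> c d /(subsetP hsub); rewrite morphimE => /imsetP [[a b] _ e].
  have -> : d = ext (m - 2) b by move: e => /(congr1 snd).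
  by rewrite an_ext ?le2 // an_out //; lia.
apply/eqP; rewrite eqEsubset hsub andbT morphimE.
apply/subsetP => _ /imsetP [[a b] _ ->]; rewrite /= /psi /=.
have [d hd] : exists d, hm (ext m a) d \in G.
  apply: (gen_from (P := fun j : 'I_m => (j < m - 1)%N)).
    move=> j hj; apply: mem_gen; apply/imsetP; exists (Ordinal hj) => //.
  move=> j hj; rewrite -anE an_ext ?le1 // an_out //; lia.
rewrite (split_hm _ _ d) groupM //.
apply: (genZ (P := fun j : 'I_(m - 2) => (j < m - 3)%N)).
  move=> j hj; rewrite -(comm_x1 j m4); apply: groupR; apply: mem_gen; apply/imsetP.
    have h0 : (0 < m - 1)%N by lia.
    by exists (Ordinal h0).
  have h2 : (j + 2 < m - 1)%N by lia.
  by exists (Ordinal h2) => //=; rewrite addnS.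
move=> j hj; rewrite -anE anB an_ext ?le2 // an_out; last by lia.
have -> : nat_of_ord j = (m - 3)%N by have := ltn_ord j; lia.
by rewrite (lastz _ _ hd) subr0.
Qed.

Theorem lemma2p1 (m : nat) (hm4 : (4 <= m)%N) :
  (* (i) centralizers of (x_1,0) and (x_m,0) *)
  ('C[hm (xb m 1) 0%R] =
     <<[set hm (xb m 1) 0%R; hm (xb m 2) 0%R] :|: Zset m>>
   /\ 'C[hm (xb m m) 0%R] =
     <<[set hm (xb m m) 0%R; hm (xb m m.-1) 0%R] :|: Zset m>>)
  (* (ii) derived subgroup = center = {(0,w)}, of order 2^(m-2) *)
  /\ ([~: [set: Hm m], [set: Hm m]] = 'Z([set: Hm m])
      /\ 'Z([set: Hm m]) = Zset m
      /\ #|Zset m| = (2 ^ (m - 2))%N)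
  (* (iii) X = {(v,0)} is a transversal to Z(H_m) in H_m *)
  /\ is_transversal [set hm v 0%R | v : 'rV['F_2]_m]
       (rcosets 'Z([set: Hm m]) [set: Hm m]) [set: Hm m]
  (* (iv) <(x_1,0),...,(x_(m-1),0)> is isomorphic to H_(m-1) *)
  /\ <<[set hm (xb m i.+1) 0%R | i : 'I_(m - 1)]>> \isog [set: Hm (m - 1)].
Proof.
split; first by split; [exact: part_i1 | exact: part_i2].
split; first by split; [exact: part_der | split; [exact: part_Z | exact: card_Zset]].
by split; [exact: part_iii | exact: part_iv].
Qed.
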